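(* Let $0<\beta<\gamma\le1$, $p>0$, $m\ge0$ an integer, and $\theta=(k_r)$ a lacunary sequence. Then $N_\theta^\beta(p,F,\Delta^m)\subset N_\theta^\gamma(p,F,\Delta^m)$, and this inclusion is strict.
   Context: A fuzzy number is a map $X:\mathbb{R}\to[0,1]$ which is normal, fuzzy convex, upper semicontinuous, with compact closure of $\{t:X(t)>0\}$; $L(\mathbb{R})$ is the set of fuzzy numbers. Level sets $[X]^\alpha=\{t:X(t)\ge\alpha\}$ ($\alpha\in(0,1]$), $[X]^0=\overline{\{t:X(t)>0\}}$, are compact intervals $[u^\alpha,v^\alpha]$. Subtraction: $[X-Y]^\alpha=[u_1^\alpha-v_2^\alpha,v_1^\alpha-u_2^\alpha]$. Metric: $d(X,Y)=\sup_{\alpha\in[0,1]}\max\{|u_1^\alpha-u_2^\alpha|,|v_1^\alpha-v_2^\alpha|\}$. $(\Delta^0X)_k=X_k$, $(\Delta^1X)_k=X_k-X_{k+1}$, $(\Delta^mX)_k=(\Delta^1(\Delta^{m-1}X))_k$. A lacunary sequence is an increasing integer sequence $\theta=(k_r)_{r\ge0}$ with $k_0=0$, $h_r=k_r-k_{r-1}\to\infty$; $I_r=(k_{r-1},k_r]$. For $\beta\in(0,1]$, $N_\theta^\beta(p,F,\Delta^m)$ is the set of sequences $X=(X_k)$ of fuzzy numbers for which there is $X_0\in L(\mathbb{R})$ with $\lim_r\frac{1}{h_r^\beta}\sum_{k\in I_r}d(\Delta^mX_k,X_0)^p=0$. *)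

(* Defs.v *)
From HB Require Import structures.
From mathcomp Require Import all_boot all_order all_algebra.
From mathcomp Require Import all_classical all_reals all_analysis.
Set Implicit Arguments. Unset Strict Implicit. Unset Printing Implicit Defensive.
Import Order.TTheory GRing.Theory Num.Theory.
Import numFieldNormedType.Exports.
Local Open Scope classical_set_scope.
Local Open Scope ring_scope.

Section Fuzzy.
Variable R : realType.

Definition is_fuzzy (X : R -> R) : Prop :=
  [/\ (forall t, 0 <= X t <= 1),
      (exists t, X t = 1),
      (forall s t l, 0 <= l <= 1 -> Num.min (X s) (X t) <= X (l * s + (1 - l) * t)),
      (forall t e, 0 < e -> \forall s \near t, X s < X t + e)
    & compact (closure [set t | 0 < X t])].

Definition levelset (X : R -> R) (a : R) : set R :=
  if a == 0 then closure [set t | 0 < X t] else [set t | a <= X t].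

Definition lo (X : R -> R) (a : R) : R := inf (levelset X a).
Definition hi (X : R -> R) (a : R) : R := sup (levelset X a).

(* subtraction: the fuzzy number Z with [Z]^a = [u1^a - v2^a, v1^a - u2^a],
   given by its membership function Z t = sup {a in (0,1] | t in [Z]^a}
   (and 0 when there is no such a). *)
Definition fsub (X Y : R -> R) : R -> R := fun t =>
  sup ([set 0] `|` [set a | 0 < a <= 1 /\ lo X a - hi Y a <= t <= hi X a - lo Y a]).

Definition fdist (X Y : R -> R) : R :=
  sup [set e | exists a, 0 <= a <= 1 /\
        e = Num.max `|lo X a - lo Y a| `|hi X a - hi Y a|].

Fixpoint Delta (m : nat) (X : nat -> R -> R) : nat -> R -> R :=
  match m with
  | 0 => X
  | m'.+1 => fun k => fsub (Delta m' X k) (Delta m' X k.+1)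
  end.

End Fuzzy.

Definition hr (theta : nat -> nat) (r : nat) : nat := (theta r - theta r.-1)%N.

Definition lacunary (theta : nat -> nat) : Prop :=
  [/\ theta 0 = 0%N,
      (forall r, (theta r < theta r.+1)%N)
    & (forall M : nat, exists N : nat, forall r, (N <= r)%N -> (M <= hr theta r)%N)].

Definition N_theta {R : realType} (beta p : R) (m : nat) (theta : nat -> nat)
    (X : nat -> R -> R) : Prop :=
  (forall k, is_fuzzy (X k)) /\
  exists X0 : R -> R, is_fuzzy X0 /\
    (fun r : nat => ((hr theta r)%:R `^ beta)^-1 *
        \sum_((theta r.-1).+1 <= k < (theta r).+1)
           (fdist (Delta m X k) X0) `^ p) @ \oo --> (0 : R).

(* Main.v *)
Require Import Defs.
From HB Require Import structures.
From mathcomp Require Import all_boot all_order all_algebra.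
From mathcomp Require Import all_classical all_reals all_analysis.
From mathcomp Require Import ring lra.
Import Order.TTheory GRing.Theory Num.Theory.
Import numFieldNormedType.Exports.
Local Open Scope classical_set_scope.
Local Open Scope ring_scope.

Definition crisp {R : realType} (c : R) : R -> R := fun t => if t == c then 1 else 0.

Lemma i01 {R : realType} : @Order.le _ R 0 1 && @Order.le _ R 1 1. Proof. by rewrite ler01 lexx. Qed.
Lemma i00 {R : realType} : @Order.le _ R 0 0 && @Order.le _ R 0 1. Proof. by rewrite ler01 lexx. Qed.

Lemma crisp_ge0 {R : realType} (c t : R) : 0 <= crisp c t.
Proof. by rewrite /crisp; case: ifP. Qed.

Lemma crisp_le1 {R : realType} (c t : R) : crisp c t <= 1.
Proof. by rewrite /crisp; case: ifP. Qed.

Lemma closure1 {R : realType} (c : R) : closure [set c] = [set c].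
Proof.
symmetry; apply/closure_id; apply: compact_closed; [exact: Rhausdorff|exact: compact_set1].
Qed.

Lemma supp_crisp {R : realType} (c : R) : [set t | 0 < crisp c t] = [set c].
Proof.
apply/seteqP; split => t /=; rewrite /crisp.
  by case: eqP => // _; rewrite ltxx.
by move=> ->; rewrite eqxx ltr01.
Qed.

Lemma crisp_fuzzy {R : realType} (c : R) : is_fuzzy (crisp c).
Proof.
split.
- by move=> t; rewrite crisp_ge0 crisp_le1.
- by exists c; rewrite /crisp eqxx.
- move=> s t l _.
  case: (eqVneq s c) => [->|sc]; last first.
    by rewrite ge_min; apply/orP; left; rewrite [crisp c s]/crisp (negbTE sc) crisp_ge0.
  case: (eqVneq t c) => [->|tc]; last first.
    by rewrite ge_min; apply/orP; right; rewrite [crisp c t]/crisp (negbTE tc) crisp_ge0.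
  have -> : l * c + (1 - l) * c = c by ring.
  by rewrite minxx.
- move=> t e e0.
  case: (eqVneq t c) => [->|tc].
    apply: filterE => s; rewrite {2}/crisp eqxx.
    by rewrite (le_lt_trans (crisp_le1 _ _)) // ltrDl.
  have : \forall s \near t, s - c != 0.
    have hc : (fun s => s - c) @ t --> t - c.
      by apply: cvgB; [exact: cvg_id|exact: cvg_cst].
    by apply: (cvgr_neq0 _ hc); rewrite subr_eq0.
  apply: filterS => s; rewrite subr_eq0 => sc.
  by rewrite /crisp (negbTE sc) (negbTE tc) add0r.
- by rewrite supp_crisp closure1; exact: compact_set1.
Qed.

Lemma levelset_crisp {R : realType} (c a : R) : 0 <= a <= 1 -> levelset (crisp c) a = [set c].
Proof.
move=> /andP[a0 a1]; rewrite /levelset; case: eqP => [_|an0].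
  by rewrite supp_crisp closure1.
apply/seteqP; split => t /=; rewrite /crisp.
  case: eqP => // _; rewrite leNgt lt_neqAle a0 andbT.
  by move: an0 => /eqP; rewrite eq_sym => ->.
by move=> ->; rewrite eqxx.
Qed.

Lemma lo_crisp {R : realType} (c a : R) : 0 <= a <= 1 -> lo (crisp c) a = c.
Proof. by move=> h; rewrite /lo levelset_crisp // inf1. Qed.

Lemma hi_crisp {R : realType} (c a : R) : 0 <= a <= 1 -> hi (crisp c) a = c.
Proof. by move=> h; rewrite /hi levelset_crisp // sup1. Qed.

Lemma fsub_crisp {R : realType} (a b : R) : fsub (crisp a) (crisp b) = crisp (a - b).
Proof.
apply/funext => t; rewrite /fsub [crisp (a - b) t]/crisp.
case: eqP => [->|tn].
  apply/le_anti/andP; split.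
    apply: ge_sup; first by exists 0; left.
    move=> x [->|[/andP[_ ->]]] //.
  apply: ub_le_sup; last first.
    right; split; first by rewrite ltr01 lexx.
    by rewrite !lo_crisp ?i01 // !hi_crisp ?i01 // lexx.
  exists 1 => x [->|[/andP[_ ->]]] //.
set S := (X in sup X).
have -> : S = [set 0]; last by rewrite sup1.
apply/seteqP; split => x; last by move=> ->; left.
case => // -[/andP[x0 x1]].
rewrite !lo_crisp ?hi_crisp ?(ltW x0) ?x1 // => h.
by exfalso; apply: tn; apply/le_anti; rewrite andbC.
Qed.

Lemma fdist_crisp {R : realType} (a b : R) : fdist (crisp a) (crisp b) = `|a - b|.
Proof.
rewrite /fdist.
have -> : [set e | exists x, 0 <= x <= 1 /\ e = Num.max `|lo (crisp a) x - lo (crisp b) x|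
        `|hi (crisp a) x - hi (crisp b) x|] = [set `|a - b|]; last by rewrite sup1.
apply/seteqP; split => e /=.
  by move=> [x [hx ->]]; rewrite !lo_crisp ?hi_crisp // maxxx.
move=> ->; exists 0; split; first by rewrite lexx ler01.
by rewrite !lo_crisp ?hi_crisp ?lexx ?ler01 // maxxx.
Qed.

Lemma sup_bnd {R : realType} (S : set R) (M : R) : 0 <= M -> S `<=` [set x | `|x| <= M] -> `|sup S| <= M.
Proof.
move=> M0 SM.
have [[x Sx]|S0] := pselect (S !=set0); last first.
  have -> : S = set0 by apply/seteqP; split => // x Sx; apply: S0; exists x.
  by rewrite sup0 normr0.
have ub : has_ubound S by exists M => y /SM /= /ler_normlP [].
rewrite ler_norml; apply/andP; split.
  apply: (le_trans _ (ub_le_sup ub Sx)).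
  by have /= /ler_normlP [] := SM _ Sx; rewrite lerNl.
apply: ge_sup; first by exists x.
by move=> y /SM /= /ler_normlP [].
Qed.

Lemma inf_bnd {R : realType} (S : set R) (M : R) : 0 <= M -> S `<=` [set x | `|x| <= M] -> `|inf S| <= M.
Proof.
move=> M0 SM; rewrite /inf normrN; apply: sup_bnd => // y [x Sx <-] /=.
by rewrite normrN; exact: SM.
Qed.

Lemma fdist_lb {R : realType} (c : R) (X0 : R -> R) : is_fuzzy X0 -> `|c - lo X0 0| <= fdist (crisp c) X0.
Proof.
case=> _ _ _ _ Kc.
have [M [M0p HK]] : exists M : R, 0 <= M /\ closure [set t | 0 < X0 t] `<=` [set x | `|x| <= M].
  have [M0 [_ HM]] := compact_bounded Kc.
  exists (`|M0| + 1); split; first by rewrite addr_ge0.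
  by move=> x Kx; apply: (HM (`|M0| + 1)) => //; rewrite (le_lt_trans (ler_norm M0)) // ltrDl.
have Hl : forall a, 0 <= a <= 1 -> levelset X0 a `<=` [set x | `|x| <= M].
  move=> a /andP[a0 _] x; rewrite /levelset; case: eqP => [_|an0]; first exact: HK.
  move=> /= ax; apply: HK; apply: subset_closure => /=.
  by apply: lt_le_trans ax; rewrite lt_neqAle a0 andbT eq_sym; apply/eqP.
rewrite /fdist; set E := (X in sup X).
have ubE : has_ubound E.
  exists (`|c| + M) => e [a [ha ->]].
  rewrite ge_max !lo_crisp ?hi_crisp //.
  by apply/andP; split; rewrite (le_trans (ler_normB _ _)) // lerD2l;
    first [exact: inf_bnd (Hl _ ha) | exact: sup_bnd (Hl _ ha)].
apply: le_trans (ub_le_sup ubE _); last by exists 0; split; first by rewrite lexx ler01.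
by rewrite lo_crisp ?lexx ?ler01 // le_max lexx.
Qed.


Fixpoint rdelta {R : realType} (m : nat) (x : nat -> R) : nat -> R :=
  match m with 0 => x | m'.+1 => fun k => rdelta m' x k - rdelta m' x k.+1 end.

Lemma Delta_crisp {R : realType} m (x : nat -> R) :
  Delta m (fun k => crisp (x k)) = fun k => crisp (rdelta m x k).
Proof. by elim: m => //= m IH; rewrite IH; apply/funext => k; exact: fsub_crisp. Qed.

Definition antid {R : realType} (y : nat -> R) : nat -> R := fun k => - \sum_(j < k) y j.

Lemma rdelta_antid {R : realType} m (y : nat -> R) : rdelta m (iter m antid y) = y.
Proof.
elim: m y => // m IH y.
have -> : rdelta m.+1 (iter m.+1 antid y) =
   fun k => rdelta m (iter m antid (antid y)) k - rdelta m (iter m antid (antid y)) k.+1.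
  by rewrite iterSr.
rewrite IH; apply/funext => k; rewrite /antid big_ord_recr /=; ring.
Qed.

Definition yseq {R : realType} (theta : nat -> nat) (v : nat -> R) (k : nat) : R :=
  \sum_(r < k.+1) (if theta r == k then v r else 0).

Lemma th_lt {theta : nat -> nat} : (forall r, (theta r < theta r.+1)%N) ->
  forall i j, (i < j)%N -> (theta i < theta j)%N.
Proof. move=> h; apply: (@homo_ltn _ theta (fun a b => (a < b)%N)) => //; exact: ltn_trans. Qed.

Lemma th_le {theta : nat -> nat} : (forall r, (theta r < theta r.+1)%N) ->
  forall i j, (i <= j)%N -> (theta i <= theta j)%N.
Proof. move=> h; apply: (@homo_leq _ theta (fun a b => (a <= b)%N)) => //; [exact: leq_trans| move=> r; exact: ltnW]. Qed.

Lemma th_ge {theta : nat -> nat} : (forall r, (theta r < theta r.+1)%N) ->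
  forall r, (r <= theta r)%N.
Proof. by move=> h; elim=> // r IH; apply: leq_ltn_trans IH (h r). Qed.

Lemma y_at {R : realType} theta (v : nat -> R) : (forall r, (theta r < theta r.+1)%N) ->
  forall r, yseq theta v (theta r) = v r.
Proof.
move=> h r; have hr : (r < (theta r).+1)%N by rewrite ltnS th_ge.
rewrite /yseq (bigD1 (Ordinal hr)) //= eqxx big1 ?addr0 // => j jr.
case: eqP => // hj; exfalso.
have [/(th_lt h)|/(th_lt h)|e] := ltngtP j r; last by move/eqP: jr; apply; apply: val_inj.
  by rewrite hj ltnn.
by rewrite hj ltnn.
Qed.

Lemma y_zero {R : realType} theta (v : nat -> R) : (forall r, (theta r < theta r.+1)%N) ->
  forall r k, (theta r < k < theta r.+1)%N -> yseq theta v k = 0.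
Proof.
move=> h r k /andP[h1 h2]; rewrite /yseq big1 // => j _.
case: eqP => // hj; exfalso.
have [/(th_le h)|/(th_le h)] := leqP j r; rewrite hj.
  by rewrite leqNgt h1.
by rewrite leqNgt h2.
Qed.

Lemma block {R : realType} theta (v : nat -> R) (G : R -> R) :
  (forall r, (theta r < theta r.+1)%N) -> forall r,
  \sum_((theta r).+1 <= k < (theta r.+1).+1) G (yseq theta v k) =
  G 0 *+ (hr theta r.+1 - 1) + G (v r.+1).
Proof.
move=> h r; rewrite big_nat_recr //= y_at //.
rewrite (eq_big_nat _ _ (F2 := fun=> G 0)); last first.
  by move=> k hk; rewrite (@y_zero _ theta v h r).
by rewrite sumr_const_nat /hr /= subnS subn1.
Qed.

Lemma part1 (R : realType) (beta gamma p : R) (m : nat) (theta : nat -> nat) :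
  0 < beta -> beta < gamma -> 
  (forall X : nat -> R -> R, N_theta beta p m theta X -> N_theta gamma p m theta X).
Proof.
move=> b0 bg X [HX [X0 [HX0 Hc]]]; split => //; exists X0; split => //.
apply: (squeeze_cvgr _ (cvg_cst 0) Hc).
apply: filterE => r; set S := \sum_(_ <= _ < _) _.
have S0 : 0 <= S by apply: sumr_ge0 => k _; exact: powR_ge0.
apply/andP; split; first by rewrite mulr_ge0 // invr_ge0 powR_ge0.
apply: ler_wpM2r => //.
case: (posnP (hr theta r)) => [->|h0].
  by rewrite !powR0 ?invr0 // gt_eqF // (lt_trans b0).
rewrite lef_pV2 ?posrE ?powR_gt0 ?ltr0n //.
by apply: ler_powR; [rewrite ler1n | exact: ltW].
Qed.

Lemma part2 (R : realType) (beta gamma p : R) (m : nat) (theta : nat -> nat) :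
  0 < beta -> beta < gamma -> gamma <= 1 -> 0 < p -> lacunary theta ->
  (exists X : nat -> R -> R, N_theta gamma p m theta X /\ ~ N_theta beta p m theta X).
Proof.
move=> b0 bg g1 p0 [th0 thS thL].
pose v : nat -> R := fun r => (hr theta r)%:R `^ (beta / p).
pose y := yseq theta v.
pose X := fun k => @crisp R (iter m antid y k).
have HD : Delta m X = fun k => crisp (y k) by rewrite /X Delta_crisp rdelta_antid.
have vp : forall r, v r `^ p = (hr theta r)%:R `^ beta.
  by move=> r; rewrite /v -powRrM divfK // gt_eqF.
have hpos : forall r, (0 < hr theta r.+1)%N by move=> r; rewrite /hr /= subn_gt0.
have XF : forall k, is_fuzzy (X k) by move=> k; exact: crisp_fuzzy.
exists X; split.
  split => //; exists (crisp 0); split; first exact: crisp_fuzzy.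
  rewrite HD; apply/cvgrPdist_le => eps e0.
  pose c := gamma - beta.
  have c0 : 0 < c by rewrite subr_gt0.
  pose T := (eps^-1) `^ (c^-1).
  have [N' HN'] := thL (Num.truncn T).+1.
  near=> r.
  have r1 : (N' <= r)%N by near: r; exact: nbhs_infty_ge.
  have r2 : (1 <= r)%N by near: r; exact: nbhs_infty_ge.
  have hN := HN' r r1.
  move: hN; have [r' ->] : exists r', r = r'.+1 by exists r.-1; rewrite prednK.
  move=> hN.
  under eq_bigr => k _ do rewrite fdist_crisp subr0.
  rewrite sub0r normrN (block _ _ (fun z : R => `|z| `^ p)) // normr0 powR0 ?gt_eqF // mul0rn add0r.
  change (r'.+1.-1) with r'.
  rewrite (@ger0_norm _ (v r'.+1)) ?powR_ge0 // vp.
  set H := (hr theta r'.+1)%:R.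
  have H0 : 0 < H by rewrite ltr0n.
  have -> : gamma = beta + c by rewrite /c; ring.
  rewrite powRD; last by rewrite (gt_eqF H0) implybT.
  rewrite invfM mulrAC mulVf ?gt_eqF ?powR_gt0 // mul1r.
  rewrite ger0_norm ?invr_ge0 ?powR_ge0 //.
  rewrite invf_ple ?posrE ?powR_gt0 ?invr_gt0 //.
  have -> : eps^-1 = T `^ c by rewrite /T -powRrM mulVf ?gt_eqF // powRr1 // invr_ge0 ltW.
  apply: ge0_ler_powR; rewrite ?nnegrE ?powR_ge0 ?(ltW c0) ?(ltW H0) //.
  by apply: (le_trans (ltW (truncnS_gt T))); rewrite /H ler_nat.
move=> [_ [X0 [HX0 Hc]]].
rewrite HD in Hc.
set L := lo X0 0.
have key : forall r, ((hr theta r.+1)%:R `^ beta)^-1 *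
    ((`|0 - L| `^ p) *+ (hr theta r.+1 - 1) + `|v r.+1 - L| `^ p)
    <= ((hr theta r.+1)%:R `^ beta)^-1 *
    \sum_((theta r.+1.-1).+1 <= k < (theta r.+1).+1) fdist (crisp (y k)) X0 `^ p.
  move=> r; apply: ler_wpM2l; first by rewrite invr_ge0 powR_ge0.
  rewrite -(block _ _ (fun z : R => `|z - L| `^ p)) //.
  apply: ler_sum => k _; apply: ge0_ler_powR.
  - exact: ltW p0.
  - by rewrite nnegrE.
  - by rewrite nnegrE; exact: le_trans (normr_ge0 (y k - L)) (fdist_lb (y k) X0 HX0).
  - exact: (fdist_lb (y k) X0 HX0).
have [L0|L0] := eqVneq L 0.
  pose proof (cvgr_lt _ Hc 1 ltr01) as Hlt.
  have : \forall r \near \oo, False.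
    move: (nbhs_infty_ge 1); apply: filterS2 Hlt => r /= h2 r2.
    move: (key r.-1); rewrite prednK //.
    rewrite L0 !subr0 (@ger0_norm _ (v r)) ?powR_ge0 // vp.
    rewrite normr0 powR0 ?gt_eqF // mul0rn add0r mulVf; last first.
      by rewrite gt_eqF // powR_gt0 // ltr0n -(prednK r2) hpos.
    by move=> h1; move: (le_lt_trans h1 h2); rewrite ltxx.
  by case/filter_ex.
pose P := `|L| `^ p.
have P0 : 0 < P by rewrite powR_gt0 // normr_gt0.
pose proof (cvgr_lt _ Hc (P / 2) (divr_gt0 P0 (ltr0Sn R 1))) as Hlt.
have [N' HN'] := thL 2.
have : \forall r \near \oo, False.
  move: (nbhs_infty_ge N'.+1); apply: filterS2 Hlt => r /= k2 r2.
  have r1 : (1 <= r)%N by apply: leq_trans r2.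
  have h2 : (2 <= hr theta r)%N by apply: HN'; apply: ltnW.
  move: (key r.-1); rewrite prednK //.
  rewrite sub0r normrN -/P.
  set hh := (hr theta r)%:R.
  have hh2 : 2 <= hh by rewrite /hh (ler_nat R 2).
  have hh0 : 0 < hh by apply: lt_le_trans hh2.
  set Q := `|v r - L| `^ p.
  have Q0 : 0 <= Q by exact: powR_ge0.
  move=> k1.
  suff : P / 2 <= (hh `^ beta)^-1 * (P *+ (hr theta r - 1) + Q).
    by move=> k3; move: (le_lt_trans (le_trans k3 k1) k2); rewrite ltxx.
  apply: (@le_trans _ _ ((hh `^ beta)^-1 * (P *+ (hr theta r - 1)))); last first.
    by apply: ler_wpM2l; [rewrite invr_ge0 powR_ge0 | rewrite lerDl].
  have -> : P *+ (hr theta r - 1) = P * (hh - 1).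
    by rewrite -mulr_natr /hh natrB //; apply: leq_trans h2.
  apply: (@le_trans _ _ (hh^-1 * (P * (hh - 1)))); last first.
    apply: ler_wpM2r.
      by rewrite mulr_ge0 ?(ltW P0) // subr_ge0 (le_trans _ hh2) // ler1n.
    rewrite lef_pV2 ?posrE ?powR_gt0 //.
    by apply: ler1_powR; [apply: le_trans hh2; rewrite ler1n | apply: ltW (lt_le_trans bg g1)].
  rewrite mulrCA ler_pM2l // mulrBr mulr1 mulVf ?gt_eqF //.
  have hi : hh^-1 <= 2^-1 by rewrite lef_pV2 ?posrE // ltr0Sn.
  lra.
by case/filter_ex.
Unshelve. all: end_near.
Qed.

Theorem theorem2p12 (R : realType) (beta gamma p : R) (m : nat) (theta : nat -> nat) :
  0 < beta -> beta < gamma -> gamma <= 1 -> 0 < p -> lacunary theta ->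
  (forall X : nat -> R -> R, N_theta beta p m theta X -> N_theta gamma p m theta X) /\
  (exists X : nat -> R -> R, N_theta gamma p m theta X /\ ~ N_theta beta p m theta X).
Proof.
move=> b0 bg g1 p0 lac; split; first exact: part1.
exact: part2.
Qed.
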